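(* Let $l_2$ be an odd integer with $l_2\ge 3$ and let $G=\Theta(2,l_2,2)$. Then $P_\ell(G,3)=P(G,3)$.
   Context: For positive integers $l_1,l_2,l_3$, the theta graph $\Theta(l_1,l_2,l_3)$ consists of two end vertices joined by three internally disjoint paths of lengths (numbers of edges) $l_1,l_2,l_3$. A $3$-assignment $L$ for $G$ assigns to each vertex $v$ a set $L(v)$ of $3$ colors; $P(G,L)$ is the number of proper colorings $f$ of $G$ with $f(v)\in L(v)$ for all $v$. $P(G,3)$ is the number of proper colorings of $G$ with colors from $\{1,2,3\}$, and $P_\ell(G,3)$ is the minimum of $P(G,L)$ over all $3$-assignments $L$ for $G$. *)

(* Defs.v *)
From mathcomp Require Import all_boot.
Set Implicit Arguments. Unset Strict Implicit. Unset Printing Implicit Defensive.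

(* A (simple) graph is a finite vertex type V with an edge relation e
   (only pairs with e x y matter; loops do not occur in theta graphs). *)

(* ---- Theta graph Theta(l1,l2,l3) ----
   Vertex labels (naturals): end vertices 0 and 1; internal vertices of
   path 1: 2 .. l1 (l1-1 of them); of path 2: l1+1 .. l1+l2-1;
   of path 3: l1+l2 .. l1+l2+l3-2.  Total: l1+l2+l3-1 vertices. *)
Definition theta_paths (l1 l2 l3 : nat) : seq (seq nat) :=
  [:: 0 :: rcons (iota 2 l1.-1) 1;
      0 :: rcons (iota (l1 + 1) l2.-1) 1;
      0 :: rcons (iota (l1 + l2) l3.-1) 1].

Definition theta_adj (l1 l2 l3 : nat) (x y : nat) : bool :=
  has (fun s => has (fun p => (p == (x, y)) || (p == (y, x))) (zip s (behead s)))
      (theta_paths l1 l2 l3).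

Definition theta_V (l1 l2 l3 : nat) : finType := 'I_(l1 + l2 + l3 - 1).

Definition theta_E (l1 l2 l3 : nat) : rel (theta_V l1 l2 l3) :=
  fun x y => theta_adj l1 l2 l3 (val x) (val y).

Definition proper_col (V : finType) (e : rel V) (C : Type) (f : V -> C) : Prop :=
  forall x y, e x y -> f x <> f y.

Definition chrom_poly (V : finType) (e : rel V) (k : nat) : nat :=
  #|[set f : {ffun V -> 'I_k} | [forall x, forall y, e x y ==> (f x != f y)]]|.

Definition k_assignment (V : finType) (k : nat) (L : V -> seq nat) : Prop :=
  forall v, uniq (L v) /\ size (L v) = k.

Definition color_bound (V : finType) (L : V -> seq nat) : nat :=
  (\max_(v : V) \max_(c <- L v) c).+1.

(* Every L-coloring takes values
   below color_bound L, so counting functions into 'I_(color_bound L)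
   (identified with their nat values) counts exactly the L-colorings. *)
Definition list_col_count (V : finType) (e : rel V) (L : V -> seq nat) : nat :=
  #|[set f : {ffun V -> 'I_(color_bound L)} |
       [forall x, (val (f x) \in L x)] &&
       [forall x, forall y, e x y ==> (f x != f y)]]|.

Definition is_list_col_min (V : finType) (e : rel V) (k m : nat) : Prop :=
  (exists L : V -> seq nat, k_assignment k L /\ list_col_count e L = m) /\
  (forall L : V -> seq nat, k_assignment k L -> m <= list_col_count e L).

Arguments theta_E : clear implicits.

(* Main.v *)
Require Import Defs.
From mathcomp Require Import all_boot.
From mathcomp Require Import zify.
Set Implicit Arguments. Unset Strict Implicit. Unset Printing Implicit Defensive.

Fixpoint allseq (B n : nat) : seq (seq nat) :=
  if n is n'.+1 then [seq c :: s | c <- iota 0 B, s <- allseq B n'] else [:: [::]].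

Lemma sum_allpairs_cons (r : seq nat) (t : seq (seq nat)) (F : seq nat -> nat) :
  \sum_(s <- [seq c :: s | c <- r, s <- t]) F s = \sum_(c <- r) \sum_(s <- t) F (c :: s).
Proof.
elim: r => [|c r IH]; first by rewrite !big_nil.
by rewrite allpairs_cons big_cat big_map IH big_cons.
Qed.

Lemma sum_allseqS B n (F : seq nat -> nat) :
  \sum_(s <- allseq B n.+1) F s = \sum_(c <- iota 0 B) \sum_(s <- allseq B n) F (c :: s).
Proof. exact: sum_allpairs_cons. Qed.

Lemma mem_allseq B n s : (s \in allseq B n) = (size s == n) && all (fun c => c < B) s.
Proof.
elim: n s => [|n IH] s /=.
  by case: s.
apply/allpairsP/idP.
  move=> [[c t] /= [Hc Ht ->]]; rewrite /= eqSS.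
  by move: Ht; rewrite IH mem_iota /= in Hc *; case/andP=> -> ->; rewrite andbT.
case: s => [|c t] //=; rewrite eqSS => /andP[Hs /andP[Hc Ht]].
by exists (c, t); split => //=; rewrite ?mem_iota ?IH ?Hs //.
Qed.

Lemma uniq_allseq B n : uniq (allseq B n).
Proof.
elim: n => [|n IH] //=.
apply: allpairs_uniq => //; first exact: iota_uniq.
by move=> [a b] [c d] _ _ /= [-> ->].
Qed.

Definition fseq n B (f : {ffun 'I_n -> 'I_B}) : seq nat := [seq val (f i) | i <- enum 'I_n].

Lemma nth_fseq n B (f : {ffun 'I_n -> 'I_B}) (i : 'I_n) : nth 0 (fseq f) i = f i.
Proof.
rewrite /fseq (nth_map i) ?size_enum_ord ?ltn_ord //.
by rewrite nth_ord_enum.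
Qed.

Lemma size_fseq n B (f : {ffun 'I_n -> 'I_B}) : size (fseq f) = n.
Proof. by rewrite /fseq size_map size_enum_ord. Qed.

Lemma card_ffun_seq n B (W : seq nat -> bool) :
  #|[set f : {ffun 'I_n -> 'I_B.+1} | W (fseq f)]| = \sum_(s <- allseq B.+1 n) W s.
Proof.
rewrite -sum1_card.
rewrite (eq_bigl (fun f => W (fseq f))); last by move=> f; rewrite inE.
rewrite big_mkcond /= -(big_map (@fseq n B.+1) xpredT (fun s => nat_of_bool (W s))).
rewrite [in RHS]big_mkcond /=.
apply: perm_big; apply: uniq_perm.
- rewrite map_inj_uniq ?index_enum_uniq //.
  move=> f g E; apply/ffunP => i; apply: val_inj.
  by rewrite -[val (f i)](nth_fseq f) -[val (g i)](nth_fseq g) E.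
- exact: uniq_allseq.
move=> s; rewrite mem_allseq; apply/mapP/idP.
  move=> [f _ ->]; rewrite size_fseq eqxx /=.
  rewrite /fseq; apply/allP => c /mapP [i _ ->]; exact: ltn_ord.
case/andP => /eqP Hs /allP Ha.
exists [ffun i : 'I_n => inord (nth 0 s i) : 'I_B.+1]; first by rewrite mem_index_enum.
apply: (@eq_from_nth _ 0); first by rewrite size_fseq.
move=> i; rewrite Hs => Hi.
have := nth_fseq [ffun i : 'I_n => inord (nth 0 s i) : 'I_B.+1] (Ordinal Hi).
rewrite /= => ->; rewrite ffunE /= inordK //.
by apply: Ha; rewrite mem_nth // Hs.
Qed.

Lemma sum_allseq_split B m k (F G : seq nat -> nat) :
  \sum_(t <- allseq B (m + k)) F (take m t) * G (drop m t) =
  (\sum_(p <- allseq B m) F p) * (\sum_(q <- allseq B k) G q).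
Proof.
elim: m F => [|m IH] F.
  rewrite add0n /= big_seq1 big_distrr /=.
  by apply: eq_bigr => t _; rewrite take0 drop0.
rewrite addSn !sum_allseqS big_distrl /=.
apply: eq_bigr => c _.
by rewrite -(IH (fun p => F (c :: p))).
Qed.

Lemma sum_iota_mem B (L : seq nat) (G : nat -> nat) :
  uniq L -> all (fun c => c < B) L ->
  \sum_(c <- iota 0 B) (c \in L) * G c = \sum_(c <- L) G c.
Proof.
move=> UL AL.
rewrite (eq_bigr (fun c => if c \in L then G c else 0)); last by move=> c _; rewrite mulnbl.
rewrite -big_mkcond -big_filter; apply: perm_big; apply: uniq_perm => //.
  by rewrite filter_uniq // iota_uniq.
move=> c; rewrite mem_filter mem_iota /= add0n.
case H: (c \in L) => //=.
by move/allP: AL => /(_ c H) ->.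
Qed.

Fixpoint pc (x : nat) (Ls : seq (seq nat)) (y : nat) : nat :=
  if Ls is L :: Ls' then \sum_(c <- L) (c != x) * pc c Ls' y else (x != y).

Fixpoint pok (x : nat) (Ls : seq (seq nat)) (p : seq nat) (y : nat) : bool :=
  match Ls, p with
  | [::], [::] => x != y
  | L :: Ls', c :: p' => (c \in L) && (c != x) && pok c Ls' p' y
  | _, _ => false
  end.

Lemma sum_pok B x Ls y :
  all (fun L => uniq L && all (fun c => c < B) L) Ls ->
  \sum_(p <- allseq B (size Ls)) pok x Ls p y = pc x Ls y.
Proof.
elim: Ls x => [|L Ls IH] x /=; first by rewrite big_seq1.
case/andP => /andP [UL AL] HLs.
rewrite sum_allseqS -(sum_iota_mem _ UL AL).
apply: eq_bigr => c _.
rewrite -IH // big_distrr big_distrr /=.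
apply: eq_bigr => p _.
by case: (c \in L); case: (c != x); rewrite ?mul1n ?mul0n.
Qed.

Lemma pok_all (I : seq nat) (f : nat -> nat) (g : nat -> seq nat) x y :
  pok x (map g I) (map f I) y =
  path (fun a b => a != b) x (rcons (map f I) y) && all (fun j => f j \in g j) I.
Proof.
elim: I x => [|j I IH] x /=; first by rewrite !andbT.
rewrite IH eq_sym.
by case: (f j \in g j); case: (x != f j); case: path; case: all.
Qed.

Definition allE (g : nat -> nat) (q : seq nat) :=
  all (fun p => g p.1 != g p.2) (zip q (behead q)).

Lemma mem_zip' (q r : seq nat) (p : nat * nat) : p \in zip q r -> (p.1 \in q) && (p.2 \in r).
Proof.
elim: q r => [|a q IH] [|b r] //=.
rewrite in_cons => /orP [/eqP -> | /IH /andP [H1 H2]]; first by rewrite !in_cons !eqxx.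
by rewrite !in_cons H1 H2 !orbT.
Qed.

Lemma proper_equiv (N : nat) (Ps : seq (seq nat)) (g : nat -> nat) :
  all (fun q => all (fun i => i < N) q) Ps ->
  (forall a b, a < N -> b < N ->
     has (fun s => has (fun p => (p == (a, b)) || (p == (b, a))) (zip s (behead s))) Ps ->
     g a != g b) <-> all (allE g) Ps.
Proof.
move=> HPs; split.
  move=> H; apply/allP => q Hq; apply/allP => [[a b]] Hp /=.
  have /andP [Ha Hb] := mem_zip' Hp.
  have /allP Hq' := allP HPs q Hq.
  apply: H; first exact: Hq'.
    by apply: Hq'; apply: mem_behead.
  by apply/hasP; exists q => //; apply/hasP; exists (a, b) => //; rewrite eqxx.
move=> /allP H a b Ha Hb /hasP [q Hq /hasP [p Hp /orP [/eqP E | /eqP E]]].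
  by have := allP (H q Hq) p Hp; rewrite E.
by have := allP (H q Hq) p Hp; rewrite E /= eq_sym.
Qed.

Lemma allE_path (g : nat -> nat) a r :
  allE g (a :: r) = path (fun c d => c != d) (g a) (map g r).
Proof.
elim: r a => [|b r IH] a //=.
by rewrite /allE /= -IH.
Qed.

Definition Ln l (L : theta_V 2 l 2 -> seq nat) (i : nat) : seq nat :=
  oapp L [::] (insub i : option (theta_V 2 l 2)).

Definition Wl l (L : theta_V 2 l 2 -> seq nat) (s : seq nat) : bool :=
  all (fun i => nth 0 s i \in Ln L i) (iota 0 (2 + l + 2 - 1)) &&
  all (allE (nth 0 s)) (theta_paths 2 l 2).

Lemma paths_bound l : 1 <= l ->
  all (fun q => all (fun i => i < 2 + l + 2 - 1) q) (theta_paths 2 l 2).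
Proof.
move=> Hl; rewrite /theta_paths /= !all_rcons /=.
have E : 2 + l + 2 - 1 = l.+3 by lia.
rewrite E; repeat (apply/andP; split) => //; try lia.
apply/allP => i; rewrite mem_iota; lia.
Qed.

Lemma W_equiv l B (L : theta_V 2 l 2 -> seq nat) (f : {ffun theta_V 2 l 2 -> 'I_B}) :
  1 <= l ->
  [forall x, (val (f x) \in L x)] && [forall x, forall y, theta_E 2 l 2 x y ==> (f x != f y)]
  = Wl L (fseq f).
Proof.
move=> Hl; rewrite /Wl; congr andb.
  apply/forallP/allP.
    move=> H i; rewrite mem_iota add0n => Hi.
    have := H (Ordinal Hi).
    have := nth_fseq f (Ordinal Hi); rewrite /= => ->.
    by rewrite /Ln insubT /=.
  move=> H x.
  have := H (val x); rewrite mem_iota ltn_ord /= nth_fseq /Ln valK /=.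
  by apply.
apply/idP/idP.
  move/forallP => H; apply/(proper_equiv _ (paths_bound Hl)).
  move=> a b Ha Hb Hab.
  have := H (Ordinal Ha) => /forallP /(_ (Ordinal Hb)) /implyP.
  have := nth_fseq f (Ordinal Ha); have := nth_fseq f (Ordinal Hb); rewrite /= => -> ->.
  by apply.
move/(proper_equiv _ (paths_bound Hl)) => H.
apply/forallP => x; apply/forallP => y; apply/implyP => Hxy.
by have := H x y (ltn_ord x) (ltn_ord y) Hxy; rewrite !nth_fseq.
Qed.

Definition Lsl l (L : theta_V 2 l 2 -> seq nat) := [seq Ln L i | i <- iota 3 l.-1].
Definition Gb (Lb : seq nat) x y (q : seq nat) :=
  (nth 0 q 0 \in Lb) && (x != nth 0 q 0) && (nth 0 q 0 != y).

Lemma nth3 (x y z : nat) t j : nth 0 [:: x, y, z & t] (3 + j) = nth 0 t j.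
Proof. by rewrite !addSn add0n. Qed.

Lemma path_neq_map (g : nat -> nat) a r :
  path (fun c d => c != d) (g a) (map g r) = path (fun c d => g c != g d) a r.
Proof. by elim: r a => [|b r IH] a //=; rewrite IH. Qed.

Lemma W_decomp l (L : theta_V 2 l 2 -> seq nat) x y z t : 1 <= l -> size t = l ->
  Wl L [:: x, y, z & t] = [&& x \in Ln L 0, y \in Ln L 1, z \in Ln L 2, (x != z) && (z != y),
    pok x (Lsl L) (take l.-1 t) y & Gb (Ln L l.+2) x y (drop l.-1 t)].
Proof.
move=> Hl Ht.
have E : 2 + l + 2 - 1 = l.+3 by lia.
rewrite /Wl E /theta_paths /= !andbT.
have E1 : allE (nth 0 [:: x, y, z & t]) [:: 0; 2; 1] = (x != z) && (z != y).
  by rewrite /allE /= andbT.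
have E3 : allE (nth 0 [:: x, y, z & t]) [:: 0; 2 + l; 1] =
          (x != nth 0 t l.-1) && (nth 0 t l.-1 != y).
  rewrite /allE /= andbT add0n.
  by rewrite -[l in nth 0 (z :: t) l](prednK Hl).
have Eio : iota 3 l = iota (3 + 0) l.-1 ++ [:: 3 + l.-1].
  by rewrite -{1}(prednK Hl) -(addn1 l.-1) iotaD.
have Emap : [seq nth 0 [:: x, y, z & t] i | i <- iota (3 + 0) l.-1] = take l.-1 t.
  rewrite iotaDl -map_comp (eq_map (g := nth 0 t)); last by [].

  by rewrite map_nth_iota0 // Ht leq_pred.
have E2 : allE (nth 0 [:: x, y, z & t]) (0 :: rcons (iota (2 + 1) l.-1) 1) =
          path (fun c d => c != d) x (rcons (take l.-1 t) y).
  by rewrite allE_path map_rcons -Emap.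
have Epok : pok x (Lsl L) (take l.-1 t) y =
   path (fun c d => c != d) x (rcons (take l.-1 t) y) &&
   all (fun j => nth 0 t j \in Ln L (3 + j)) (iota 0 l.-1).
  rewrite /Lsl -Emap (iotaDl 3 0) -!map_comp.
  rewrite (eq_map (f := (nth 0 [:: x, y, z & t] \o addn 3)) (g := nth 0 t)); last first.
    by move=> j; exact: nth3.
  by rewrite pok_all.
rewrite E1 E2 E3 Epok Eio all_cat (iotaDl 3 0) all_map /= andbT add0n.
rewrite /Gb nth_drop addn0 (_ : l.+2 = 3 + l.-1); last by lia.
rewrite (eq_all (a2 := fun j => nth 0 t j \in Ln L (3 + j))); last by [].
move: (x \in Ln L 0) (y \in Ln L 1) (z \in Ln L 2) (x != z) (z != y)
  (path _ x (rcons (take l.-1 t) y)) (all _ (iota 0 l.-1)) (nth 0 t l.-1 \in _)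
  (x != nth 0 t l.-1) (nth 0 t l.-1 != y).
by do 10 case.
Qed.

Definition alpha (L : seq nat) (x y : nat) : nat := \sum_(z <- L) ((x != z) && (z != y) : nat).

Lemma inner_sum l B (L : theta_V 2 l 2 -> seq nat) x y z : 1 <= l ->
  (forall v, uniq (L v) && all (fun c => c < B) (L v)) ->
  \sum_(t <- allseq B l) (Wl L [:: x, y, z & t] : nat) =
  [&& x \in Ln L 0, y \in Ln L 1, z \in Ln L 2 & (x != z) && (z != y)] *
  (pc x (Lsl L) y * alpha (Ln L l.+2) x y).
Proof.
move=> Hl HL.
have HLn : forall i, uniq (Ln L i) && all (fun c => c < B) (Ln L i).
  by move=> i; rewrite /Ln; case: insub => [v|] //=.
rewrite big_seq (eq_bigr (fun t => [&& x \in Ln L 0, y \in Ln L 1, z \in Ln L 2 & (x != z) && (z != y)] *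
    (pok x (Lsl L) (take l.-1 t) y * Gb (Ln L l.+2) x y (drop l.-1 t)))); last first.
  move=> t; rewrite mem_allseq => /andP [/eqP Ht _].
  rewrite W_decomp //.
  by move: (x \in _) (y \in _) (z \in _) (_ && _) (pok _ _ _ _) (Gb _ _ _ _) => [] [] [] [] [] [].
rewrite -big_seq -big_distrr /=; congr (_ * _).
rewrite -[l in allseq B l](prednK Hl) -addn1.
rewrite (sum_allseq_split B l.-1 1 (fun p => pok x (Lsl L) p y : nat) (fun q => Gb (Ln L l.+2) x y q : nat)).
congr (_ * _).
  rewrite -(@sum_pok B x (Lsl L) y) ?size_map ?size_iota //.
  by apply/allP => L' /mapP [i _ ->].
rewrite sum_allseqS /alpha.
have /andP [U A] := HLn l.+2.
rewrite -(sum_iota_mem _ U A); apply: eq_bigr => c _.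
rewrite big_seq1 /Gb /=.
by case: (c \in _); case: (x != c); case: (c != y).
Qed.

Lemma formula l B (L : theta_V 2 l 2 -> seq nat) : 1 <= l ->
  (forall v, uniq (L v) && all (fun c => c < B.+1) (L v)) ->
  #|[set f : {ffun theta_V 2 l 2 -> 'I_B.+1} | [forall x, (val (f x) \in L x)] &&
       [forall x, forall y, theta_E 2 l 2 x y ==> (f x != f y)]]| =
  \sum_(x <- Ln L 0) \sum_(y <- Ln L 1)
     alpha (Ln L 2) x y * pc x (Lsl L) y * alpha (Ln L l.+2) x y.
Proof.
move=> Hl HL.
have HLn : forall i, uniq (Ln L i) && all (fun c => c < B.+1) (Ln L i).
  by move=> i; rewrite /Ln; case: insub => [v|] //=.
rewrite (_ : [set f | _] = [set f : {ffun theta_V 2 l 2 -> 'I_B.+1} | Wl L (fseq f)]); last first.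
  by apply/setP => f; rewrite !inE W_equiv.
rewrite card_ffun_seq.
rewrite (_ : allseq B.+1 (2 + l + 2 - 1) = allseq B.+1 l.+3); last by congr allseq; lia.
rewrite sum_allseqS.
have /andP [U0 A0] := HLn 0.
rewrite -(sum_iota_mem _ U0 A0); apply: eq_bigr => x _.
rewrite sum_allseqS big_distrr.
have /andP [U1 A1] := HLn 1.
rewrite -(sum_iota_mem _ U1 A1); apply: eq_bigr => y _.
rewrite sum_allseqS /alpha big_distrl big_distrl big_distrr.
have /andP [U2 A2] := HLn 2.
rewrite -(sum_iota_mem _ U2 A2) big_distrr; apply: eq_bigr => z _.
rewrite inner_sum //.
by case: (x \in _); case: (y \in _); case: (z \in _); case: (x != z); case: (z != y);
  rewrite /= ?mul0n ?mul1n ?muln0.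
Qed.

Definition tri (L : seq nat) := uniq L && (size L == 3).

Lemma triP L : tri L -> exists a b c, L = [:: a; b; c] /\ [/\ a != b, a != c & b != c].
Proof.
move=> /andP [U /eqP S]; case: L S U => [|a [|b [|c [|d L]]]] //= _ U.
exists a, b, c; split => //.
by move: U; rewrite /= !inE !negb_or => /and3P [/andP [-> ->] -> _].
Qed.

Lemma tri_of a b c : a != b -> a != c -> b != c -> tri [:: a; b; c].
Proof. by move=> Hab Hac Hbc; rewrite /tri /= !inE !negb_or Hab Hac Hbc. Qed.

Lemma pc_cons a b c Ls x y : pc x ([:: a; b; c] :: Ls) y =
  (a != x) * pc a Ls y + (b != x) * pc b Ls y + (c != x) * pc c Ls y.
Proof. by rewrite /= !big_cons big_nil addn0 addnA. Qed.

Lemma two_or_three (v : nat) : 2 <= v <= 3 -> v = 2 \/ v = 3.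
Proof. lia. Qed.
Lemma one_or_two (v : nat) : 1 <= v <= 2 -> v = 1 \/ v = 2.
Proof. lia. Qed.

Lemma cnt3 (e d1 d2 d3 : nat) : d1 != d2 -> d1 != d3 -> d2 != d3 -> 2 <= (e != d1) + (e != d2) + (e != d3).
Proof. lia. Qed.
Lemma fin3 (Pa Pb Pc va vb vc Q : nat) : Q <= Pa + (Pb + (Pc + 0)) -> 2 <= va -> 2 <= vb -> 2 <= vc ->
  2 * Q <= Pa * va + Pb * vb + Pc * vc.
Proof.
move=> HQ Ha Hb Hc.
have := leq_mul (leqnn Pa) Ha; have := leq_mul (leqnn Pb) Hb; have := leq_mul (leqnn Pc) Hc.
lia.
Qed.

Lemma rearr3 (u1 u2 u3 v1 v2 v3 w1 w2 w3 Pa Pb Pc : nat) :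
  u1 * Pa + v1 * Pb + w1 * Pc + (u2 * Pa + v2 * Pb + w2 * Pc + (u3 * Pa + v3 * Pb + w3 * Pc + 0))
  = Pa * (u1 + u2 + u3) + Pb * (v1 + v2 + v3) + Pc * (w1 + w2 + w3).
Proof. lia. Qed.

Lemma I1 Ls y D : all tri Ls -> tri D -> 2 ^ (size Ls).+1 <= \sum_(d <- D) pc d Ls y.
Proof.
elim: Ls D => [|L Ls IH] D.
  move=> _ /triP [d1 [d2 [d3 [-> [H12 H13 H23]]]]].
  rewrite !big_cons big_nil /=; lia.
rewrite [all _ _]/= => /andP [/triP [a [b [c [-> [Hab Hac Hbc]]]]] HLs] /triP [d1 [d2 [d3 [-> [H12 H13 H23]]]]].
have := IH [:: a; b; c] HLs (tri_of Hab Hac Hbc).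
rewrite !big_cons !pc_cons big_nil.
set Pa := pc a Ls y; set Pb := pc b Ls y; set Pc := pc c Ls y; set Q := 2 ^ _ => HQ.
rewrite expnS -/Q.
rewrite big_nil.
rewrite rearr3.
by apply: fin3 HQ _ _ _; apply: cnt3.
Qed.

Lemma cnt3' (e d1 d2 d3 : nat) : d1 != d2 -> d1 != d3 -> d2 != d3 -> 2 <= (d1 != e) + (d2 != e) + (d3 != e).
Proof. lia. Qed.

Lemma sel2 (wa wb wc : bool) (Pa Pb Pc : nat) : 2 <= wa + wb + wc ->
  [\/ Pa + Pb <= wa * Pa + wb * Pb + wc * Pc, Pa + Pc <= wa * Pa + wb * Pb + wc * Pc
    | Pb + Pc <= wa * Pa + wb * Pb + wc * Pc].
Proof.
case: wa; case: wb; case: wc => //= _; rewrite ?mul1n ?mul0n ?add0n ?addn0.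
- by apply: Or31; lia.
- by apply: Or31.
- by apply: Or32.
- by apply: Or33.
Qed.

Lemma one2 (d x c : nat) : c != x -> 1 <= (d != x) + (d != c) <= 2.
Proof. lia. Qed.

Lemma four6 (a b c x c' : nat) : a != b -> a != c -> b != c -> c' != x ->
  4 <= ((a != x) + (a != c')) + ((b != x) + (b != c')) + ((c != x) + (c != c')).
Proof. lia. Qed.

Lemma fin_pair (ua ub uc Pa Pb Pc Q : nat) : 1 <= ua <= 2 -> 1 <= ub <= 2 -> 1 <= uc <= 2 ->
  4 <= ua + ub + uc -> Q <= Pa + (Pb + (Pc + 0)) -> Q <= 3 * Pa + 1 -> Q <= 3 * Pb + 1 -> Q <= 3 * Pc + 1 ->
  4 * Q <= 3 * (Pa * ua + Pb * ub + Pc * uc) + 1.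
Proof.
move=> /one_or_two [->|->] /one_or_two [->|->] /one_or_two [->|->] //= *; lia.
Qed.

Lemma rearr2 (u1 v1 w1 u2 v2 w2 Pa Pb Pc : nat) :
  u1 * Pa + v1 * Pb + w1 * Pc + (u2 * Pa + (v2 * Pb + (w2 * Pc + 0)))
  = Pa * (u1 + u2) + Pb * (v1 + v2) + Pc * (w1 + w2).
Proof. lia. Qed.

Lemma J Ls y : all tri Ls -> forall x,
  [/\ 2 ^ (size Ls).+1 <= 3 * pc x Ls y + 2,
      (odd (size Ls) -> 2 ^ (size Ls).+1 <= 3 * pc x Ls y + 1) &
      (~~ odd (size Ls) -> forall c, c != x -> 2 ^ (size Ls).+2 <= 3 * (pc x Ls y + pc c Ls y) + 1)].
Proof.
elim: Ls => [|L Ls IH].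
  move=> _ x /=; rewrite expn1; split; [lia | by [] | move=> _ c Hc; rewrite (_ : 2 ^ 2 = 4) //; lia].
rewrite [all _ _]/= => /andP [HL HLs] x.
have HI1 := I1 y HLs HL.
case/triP: HL => [a [b [c [EL [Hab Hac Hbc]]]]]; subst L.
rewrite !pc_cons /= !big_cons big_nil in HI1 *.
have [Ja1 Ja2 Ja3] := IH HLs a; have [Jb1 Jb2 Jb3] := IH HLs b; have [Jc1 Jc2 Jc3] := IH HLs c.
move: HI1 Ja1 Ja2 Ja3 Jb1 Jb2 Jb3 Jc1 Jc2 Jc3.
rewrite !expnS.
set Pa := pc a Ls y; set Pb := pc b Ls y; set Pc := pc c Ls y; set Q := 2 ^ size Ls.
move=> HI1 Ja1 Ja2 Ja3 Jb1 Jb2 Jb3 Jc1 Jc2 Jc3.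
have Hw := cnt3' x Hab Hac Hbc.
case: (boolP (odd (size Ls))) => Hodd.
  have Ha := Ja2 Hodd; have Hb := Jb2 Hodd; have Hc := Jc2 Hodd.
  split => //.
    by case: (sel2 Pa Pb Pc Hw) => H; clear -H Ha Hb Hc; lia.
  move=> _ c0 Hc0; rewrite !big_cons big_nil -/Pa -/Pb -/Pc rearr2.
  rewrite (_ : 2 * (2 * (2 * Q)) = 4 * (2 * Q)); last by rewrite !mulnA.
  apply: fin_pair => //; try exact: one2.
  exact: four6.
have Hab' : b != a by rewrite eq_sym.
have Hac' : c != a by rewrite eq_sym.
have Hbc' : c != b by rewrite eq_sym.
have Pab := Ja3 Hodd b Hab'; have Pac := Ja3 Hodd c Hac'; have Pbc := Jb3 Hodd c Hbc'.
rewrite -/Pb -/Pc in Pab Pac Pbc.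
have H2 : 2 * (2 * Q) <= 3 * ((a != x) * Pa + (b != x) * Pb + (c != x) * Pc) + 1.
  by case: (sel2 Pa Pb Pc Hw) => H; clear -H Pab Pac Pbc; lia.
split.
- by apply: leq_trans H2 _; rewrite leq_add2l.
- by move=> _; exact: H2.
- by [].
Qed.

Lemma alpha3 z1 z2 z3 x y : alpha [:: z1; z2; z3] x y =
  ((x != z1) && (z1 != y)) + ((x != z2) && (z2 != y)) + ((x != z3) && (z3 != y)).
Proof. by rewrite /alpha !big_cons big_nil addn0 addnA. Qed.

Lemma alpha_ge1 L x y : tri L -> 1 <= alpha L x y.
Proof. by case/triP => [z1 [z2 [z3 [-> [H1 H2 H3]]]]]; rewrite alpha3; lia. Qed.

Lemma alpha_ge2 L x : tri L -> 2 <= alpha L x x.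
Proof. by case/triP => [z1 [z2 [z3 [-> [H1 H2 H3]]]]]; rewrite alpha3; lia. Qed.

Lemma row6 x M La Lb : tri M -> tri La -> tri Lb -> x \in M ->
  6 <= \sum_(y <- M) alpha La x y * alpha Lb x y.
Proof.
move=> /triP [y1 [y2 [y3 [-> _]]]] Ha Hb Hx; rewrite !big_cons big_nil addn0.
have G1 : forall y, 1 <= alpha La x y * alpha Lb x y.
  by move=> y; rewrite -(muln1 1) leq_mul // alpha_ge1.
have G4 : 4 <= alpha La x x * alpha Lb x x.
  by rewrite (_ : 4 = 2 * 2) // leq_mul // alpha_ge2.
have := G1 y1; have := G1 y2; have := G1 y3.
move: Hx G4; rewrite !inE.
by case/orP=> [/eqP ->|/orP [/eqP ->|/eqP ->]]; lia.
Qed.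

Lemma sum_alpha K M L :
  \sum_(x <- K) \sum_(y <- M) alpha L x y =
  \sum_(z <- L) (\sum_(x <- K) (x != z)) * (\sum_(y <- M) (z != y)).
Proof.
rewrite /alpha.
rewrite (eq_bigr (fun x => \sum_(z <- L) \sum_(y <- M) ((x != z) && (z != y) : nat))); last first.
  by move=> x _; rewrite exchange_big.
rewrite exchange_big; apply: eq_bigr => z _.
rewrite big_distrl; apply: eq_bigr => x _.
rewrite big_distrr; apply: eq_bigr => y _.
by rewrite /= mulnb.
Qed.

Lemma cnt_ge2 K z : tri K -> 2 <= \sum_(x <- K) (x != z).
Proof. by case/triP => [x1 [x2 [x3 [-> [H1 H2 H3]]]]]; rewrite !big_cons big_nil; lia. Qed.

Lemma cnt_ge3 K z : tri K -> z \notin K -> 3 <= \sum_(x <- K) (x != z).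
Proof.
case/triP => [x1 [x2 [x3 [-> _]]]]; rewrite !inE !big_cons big_nil.
rewrite !negb_or => /and3P [H1 H2 H3]; lia.
Qed.

Lemma cnt_ge3' M z : tri M -> z \notin M -> 3 <= \sum_(y <- M) (z != y).
Proof.
case/triP => [x1 [x2 [x3 [-> _]]]]; rewrite !inE !big_cons big_nil.
rewrite !negb_or => /and3P [H1 H2 H3]; lia.
Qed.

Lemma cnt_ge2' M z : tri M -> 2 <= \sum_(y <- M) (z != y).
Proof. by case/triP => [x1 [x2 [x3 [-> [H1 H2 H3]]]]]; rewrite !big_cons big_nil; lia. Qed.

Lemma prod6 a b : 2 <= a -> 2 <= b -> (3 <= a) || (3 <= b) -> 6 <= a * b.
Proof.
move=> Ha Hb /orP [H|H].
  by rewrite (_ : 6 = 3 * 2) // leq_mul.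
by rewrite (_ : 6 = 2 * 3) // leq_mul.
Qed.

Lemma sumalpha14 K M L : tri K -> tri M -> tri L -> ~~ all (fun x => x \in M) K ->
  14 <= \sum_(x <- K) \sum_(y <- M) alpha L x y.
Proof.
move=> HK HM HL Hn; rewrite sum_alpha.
have Hex : ~~ all (fun z => (z \in K) && (z \in M)) L.
  apply: contra Hn => /allP H.
  have HLK : {subset L <= K} by move=> z /H /andP [].
  have sK : size K = 3 by move: HK => /andP [_ /eqP].
  have sL : size L = 3 by move: HL => /andP [_ /eqP].
  have sKL : size K <= size L by rewrite sK sL.
  have [_ EQ] := uniq_min_size (proj1 (andP HL)) HLK sKL.
  apply/allP => x Hx; have := H x; rewrite EQ Hx => /(_ isT) /andP [].
  by [].
case/triP: HL Hex => [z1 [z2 [z3 [-> _]]]] Hex.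
rewrite !big_cons big_nil addn0.
have G : forall z, 4 <= (\sum_(x <- K) (x != z)) * (\sum_(y <- M) (z != y)).
  by move=> z; rewrite (_ : 4 = 2 * 2) // leq_mul // ?cnt_ge2 ?cnt_ge2'.
have G6 : forall z, ~~ ((z \in K) && (z \in M)) -> 6 <= (\sum_(x <- K) (x != z)) * (\sum_(y <- M) (z != y)).
  move=> z; rewrite negb_and => Hz; apply: prod6; rewrite ?cnt_ge2 ?cnt_ge2' //.
  by case/orP: Hz => Hz; [rewrite cnt_ge3 | rewrite cnt_ge3' ?orbT].
have := G z1; have := G z2; have := G z3.
move: (G6 z1) (G6 z2) (G6 z3).
set p1 := _ * _; set p2 := _ * _; set p3 := _ * _.
move=> h1 h2 h3 g3 g2 g1.
rewrite leqNgt; apply/negP => Hlt.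
move/negP: Hex; apply.
rewrite /= andbT; apply/and3P; split; apply/negPn/negP => Hz.
- by have := h1 Hz; clear -g1 g2 g3 Hlt; lia.
- by have := h2 Hz; clear -g1 g2 g3 Hlt; lia.
- by have := h3 Hz; clear -g1 g2 g3 Hlt; lia.
Qed.

Lemma sumA18 K M La Lb : tri K -> tri M -> tri La -> tri Lb ->
  18 <= \sum_(x <- K) \sum_(y <- M) alpha La x y * alpha Lb x y.
Proof.
move=> HK HM Ha Hb.
case: (boolP (all (fun x => x \in M) K)) => HKM.
  move: HKM; case/triP: (HK) => [x1 [x2 [x3 [-> _]]]] /=; rewrite andbT => /and3P [h1 h2 h3].
  rewrite !big_cons big_nil addn0.
  have := row6 HM Ha Hb h1; have := row6 HM Ha Hb h2; have := row6 HM Ha Hb h3.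
  lia.
have Sa := sumalpha14 HK HM Ha HKM; have Sb := sumalpha14 HK HM Hb HKM.
have : \sum_(x <- K) \sum_(y <- M) (alpha La x y + alpha Lb x y) <=
       \sum_(x <- K) \sum_(y <- M) (alpha La x y * alpha Lb x y + 1).
  apply: leq_sum => x _; apply: leq_sum => y _.
  have := alpha_ge1 x y Ha; have := alpha_ge1 x y Hb.
  move: (alpha La x y) (alpha Lb x y) => p q hq hp.
  have := leq_mul (leqnn (p.-1)) (leq_pred q.-1.+1).
  nia.
move=> H.
case/triP: HK => [x1 [x2 [x3 [EK _]]]]; case/triP: HM => [y1 [y2 [y3 [EM _]]]].
rewrite EK EM !big_cons !big_nil /= in H Sa Sb *.
lia.
Qed.

Lemma pterm A N M2 : 1 <= A -> M2 <= 3 * N + 2 -> 3 * N + A * M2 + 2 <= 3 * (A * N) + 2 * A + M2.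
Proof.
case: A => // a _ H.
have := leq_mul (leqnn a) H.
rewrite !mulSn; lia.
Qed.

Lemma pfin M2 SA : 2 <= M2 -> 18 <= SA -> 18 * M2 + 2 * SA <= M2 * SA + 36.
Proof.
move=> H1 H2.
have [m ->] : exists m, M2 = m + 2 by exists (M2 - 2); lia.
have [t ->] : exists t, SA = t + 18 by exists (SA - 18); lia.
lia.
Qed.

Lemma lower K M La Lb Ls : tri K -> tri M -> tri La -> tri Lb -> all tri Ls -> ~~ odd (size Ls) ->
  6 * 2 ^ (size Ls).+1 <= \sum_(x <- K) \sum_(y <- M) alpha La x y * pc x Ls y * alpha Lb x y + 6.
Proof.
move=> HK HM Ha Hb HLs Hev.
have HA := sumA18 HK HM Ha Hb.
have HI := fun y => I1 y HLs HK.
have Hsum : \sum_(x <- K) \sum_(y <- M) (3 * pc x Ls y + (alpha La x y * alpha Lb x y) * 2 ^ (size Ls).+1 + 2) <=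
            \sum_(x <- K) \sum_(y <- M) (3 * ((alpha La x y * alpha Lb x y) * pc x Ls y) +
                 2 * (alpha La x y * alpha Lb x y) + 2 ^ (size Ls).+1).
  apply: leq_sum => x _; apply: leq_sum => y _; apply: pterm.
    by rewrite -(muln1 1) leq_mul // alpha_ge1.
  by case: (J y HLs x).
have H2 : 2 <= 2 ^ (size Ls).+1 by rewrite expnS leq_pmulr // expn_gt0.
move: HA HI Hsum H2.
set M2 := 2 ^ (size Ls).+1.
case/triP: HK => [x1 [x2 [x3 [EK _]]]]; case/triP: HM => [y1 [y2 [y3 [EM _]]]].
rewrite EK EM !big_cons !big_nil /= => HA HI Hsum H2.
have := HI y1; have := HI y2; have := HI y3.
rewrite !big_cons !big_nil.
have := pfin H2 HA.
clearbody M2; clear HI.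
lia.
Qed.

Definition U : seq nat := [:: 0; 1; 2].

Fixpoint abU (k : nat) : nat * nat :=
  if k is k'.+1 then let: (a, b) := abU k' in (2 * b, a + b) else (0, 1).

Lemma pcU Ls x y : all (pred1 U) Ls -> x < 3 -> y < 3 ->
  pc x Ls y = if x == y then (abU (size Ls)).1 else (abU (size Ls)).2.
Proof.
elim: Ls x => [|L Ls IH] x.
  by move=> _; case: x => [|[|[|x]]] //; case: y => [|[|[|y]]].
rewrite /= => /andP [/eqP -> HLs] Hx Hy.
rewrite !big_cons big_nil !IH //.
case: (abU (size Ls)) => a b /=; clear IH HLs.
by case: x Hx => [|[|[|x]]] //; case: y Hy => [|[|[|y]]] //= _ _; lia.
Qed.

Lemma abU_prop k : (abU k).1 + 2 * (abU k).2 = 2 ^ k.+1 /\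
  (~~ odd k -> (abU k).2 = (abU k).1 + 1) /\ (odd k -> (abU k).1 = (abU k).2 + 1).
Proof.
elim: k => [|k [IH1 [IH2 IH3]]] //=.
move: IH1 IH2 IH3; case: (abU k) => a b /= H1 H2 H3.
rewrite expnS -H1; split; first lia.
split => Ho.
  by rewrite H3 //; lia.
by rewrite H2 //; lia.
Qed.

Lemma alphaU x y : x < 3 -> y < 3 -> alpha U x y = if x == y then 2 else 1.
Proof. by rewrite /alpha /U !big_cons big_nil; case: x => [|[|[|x]]] //; case: y => [|[|[|y]]]. Qed.

Lemma uniform_val Ls : all (pred1 U) Ls -> ~~ odd (size Ls) ->
  \sum_(x <- U) \sum_(y <- U) alpha U x y * pc x Ls y * alpha U x y + 6 = 6 * 2 ^ (size Ls).+1.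
Proof.
move=> HLs Hev.
rewrite /U !big_cons !big_nil !pcU // !alphaU //=.
have [H1 [H2 _]] := abU_prop (size Ls).
move: H1 (H2 Hev); case: (abU (size Ls)) => a b /= H1 H2'.
lia.
Qed.

Lemma color_bound_all (V : finType) (L : V -> seq nat) v : all (fun c => c < color_bound L) (L v).
Proof.
apply/allP => c Hc; rewrite /color_bound ltnS.
apply: leq_trans (leq_bigmax v).
exact: (leq_bigmax_seq c Hc).
Qed.

Lemma Ln_in l (L : theta_V 2 l 2 -> seq nat) i (Hi : i < 2 + l + 2 - 1) : Ln L i = L (Ordinal Hi).
Proof. by rewrite /Ln insubT. Qed.

Definition RHS l (L : theta_V 2 l 2 -> seq nat) :=
  \sum_(x <- Ln L 0) \sum_(y <- Ln L 1) alpha (Ln L 2) x y * pc x (Lsl L) y * alpha (Ln L l.+2) x y.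

Theorem lemma2p9 (l2 : nat) :
  odd l2 -> 3 <= l2 ->
  is_list_col_min (theta_E 2 l2 2) 3 (chrom_poly (theta_E 2 l2 2) 3).
Proof.
move=> Hodd Hl.
have Hl1 : 1 <= l2 by lia.
pose L0 := fun _ : theta_V 2 l2 2 => U.
have Ln0 : forall i, i < l2.+3 -> Ln L0 i = U.
  move=> i Hi; have Hi' : i < 2 + l2 + 2 - 1 by lia.
  by rewrite (Ln_in _ Hi').
have Hcnt : forall L : theta_V 2 l2 2 -> seq nat, (forall v, uniq (L v)) ->
    list_col_count (theta_E 2 l2 2) L = RHS L.
  move=> L HU; rewrite /list_col_count.
  have := @formula l2 (\max_(v : theta_V 2 l2 2) \max_(c <- L v) c) L Hl1.
  rewrite /RHS => <- //.
  by move=> v; rewrite HU; have := color_bound_all L v.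
have Hchrom : chrom_poly (theta_E 2 l2 2) 3 = RHS L0.
  rewrite /chrom_poly /RHS -(@formula l2 2 L0 Hl1) //.
  congr (#|pred_of_set _|); apply/setP => f; rewrite !inE.
  have -> : [forall x, (val (f x) \in L0 x)] = true.
    apply/forallP => x; rewrite /L0 /U.
    by case: (f x) => [[|[|[|n]]] Hn].
  by [].
have HsizeLs : forall L : theta_V 2 l2 2 -> seq nat, size (Lsl L) = l2.-1.
  by move=> L; rewrite /Lsl size_map size_iota.
have Hev : ~~ odd l2.-1.
  by move: Hodd; rewrite -{1}(prednK Hl1) /=.
have Hval0 : RHS L0 + 6 = 6 * 2 ^ l2.
  rewrite /RHS !Ln0 //.
  have HLs0 : all (pred1 U) (Lsl L0).
    apply/allP => L' /mapP [i]; rewrite mem_iota => /andP [_ Hi] ->.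
    by rewrite /= Ln0 //; lia.
  rewrite uniform_val // HsizeLs //.
  by rewrite prednK //; lia.
split.
  exists L0; split; first by move=> v.
  by rewrite Hcnt // Hchrom.
move=> L HL.
have HU : forall v, uniq (L v) by move=> v; case: (HL v).
rewrite Hchrom Hcnt //.
have Htri : forall i, i < l2.+3 -> tri (Ln L i).
  move=> i Hi; have Hi' : i < 2 + l2 + 2 - 1 by lia.
  rewrite (Ln_in _ Hi') /tri.
  by case: (HL (Ordinal Hi')) => -> ->.
have HLs : all tri (Lsl L).
  apply/allP => L' /mapP [i]; rewrite mem_iota => /andP [_ Hi] ->.
  by apply: Htri; lia.
have := lower (Htri 0 isT) (Htri 1 isT) (Htri 2 isT) (Htri l2.+2 (ltnSn _)) HLs.
rewrite HsizeLs => /(_ Hev).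
rewrite prednK; last by lia.
move=> H; have H' : 6 * 2 ^ l2 <= RHS L + 6 by exact: H.
lia.
Qed.
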